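(* If $(\Sigma, *, \mathsf{emp})$ is a separation algebra, then $(\Sigma^+, *, \Sigma^*.\mathsf{emp})$ is a separation algebra, where for $\sigma.s, \tau.t\in\Sigma^+$ the product $\sigma.s * \tau.t$ is defined iff $\sigma=\tau$ and $s * t$ is defined, in which case $\sigma.s*\tau.t=\sigma.(s*t)$.
   Context: A separation algebra $(\Sigma,*,\mathsf{emp})$ is a partial commutative monoid with a set of units $\mathsf{emp}\subseteq\Sigma$ such that (i) every $s\in\Sigma$ has a unit $1\in\mathsf{emp}$ with $s*1=s$, and (ii) $1*1'$ is undefined for any two distinct units $1,1'\in\mathsf{emp}$. $\Sigma^+$ denotes nonempty finite sequences over $\Sigma$, $\Sigma^*$ all finite sequences, and $\sigma.s$ denotes the sequence $\sigma$ followed by $s$. *)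

(* Defs.v *)
From Stdlib Require Import List ClassicalEpsilon.
Import ListNotations.

(* A partial binary operation on S: None = undefined. *)
Definition pop (S : Type) := S -> S -> option S.

Definition pbind {S : Type} (o : option S) (f : S -> option S) : option S :=
  match o with Some x => f x | None => None end.

(* Partial commutative monoid (partial operation, Kleene-equality laws):
   a*b ~ b*a, and (a*b)*c ~ a*(b*c) (one side defined iff the other is, and
   then equal). *)
Definition partial_comm_assoc {S : Type} (op : pop S) : Prop :=
  (forall a b, op a b = op b a) /\
  (forall a b c, pbind (op a b) (fun ab => op ab c) =
                 pbind (op b c) (fun bc => op a bc)).

Definition sep_alg {S : Type} (op : pop S) (emp : S -> Prop) : Prop :=
  partial_comm_assoc op /\
  (forall s, exists u, emp u /\ op s u = Some s) /\
  (forall u u', emp u -> emp u' -> u <> u' -> op u u' = None).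

(* Nonempty sequences Sigma^+ : the pair (sigma, s) encodes sigma.s,
   with sigma : Sigma^* a (possibly empty) list. *)
Definition nseq (S : Type) : Type := (list S * S)%type.

Definition nseq_op {S : Type} (op : pop S) : pop (nseq S) :=
  fun x y =>
    if excluded_middle_informative (fst x = fst y) then
      match op (snd x) (snd y) with
      | Some r => Some (fst x, r)
      | None => None
      end
    else None.

Definition nseq_emp {S : Type} (emp : S -> Prop) : nseq S -> Prop :=
  fun x => emp (snd x).

(* Main.v *)
Require Import Defs.
From Stdlib Require Import List ClassicalEpsilon.

Theorem lemma3p1 (S : Type) (op : pop S) (emp : S -> Prop) :
  sep_alg op emp -> sep_alg (nseq_op op) (nseq_emp emp).
Proof.
  intros [[Hc Ha] [Hu He]].
  split; [split|split].
  - intros [x s] [y t]. unfold nseq_op; simpl.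
    destruct (excluded_middle_informative (x = y)) as [e|n];
    destruct (excluded_middle_informative (y = x)) as [e'|n'];
    try (subst; congruence).
    subst. rewrite Hc. reflexivity.
  - intros [x s] [y t] [z w]. unfold nseq_op; simpl.
    pose proof (Ha s t w) as H. simpl in H.
    destruct (excluded_middle_informative (x = y)) as [e|n];
    destruct (excluded_middle_informative (y = z)) as [e'|n']; subst.
    + destruct (op s t) as [r|] eqn:E1; destruct (op t w) as [q|] eqn:E2;
      simpl in *;
      repeat match goal with |- context [excluded_middle_informative ?P] =>
        destruct (excluded_middle_informative P); [|congruence] end;
      repeat match goal with |- context [op ?a ?b] =>
        let E := fresh in destruct (op a b) eqn:E end;
      congruence.
    + destruct (op s t) as [r|]; simpl; try reflexivity.
      destruct (excluded_middle_informative (y = z)); congruence.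
    + destruct (op t w) as [r|]; simpl; try reflexivity.
      destruct (excluded_middle_informative (x = z)); congruence.
    + reflexivity.
  - intros [x s]. destruct (Hu s) as [u [Hu1 Hu2]].
    exists (x, u). split; [exact Hu1|].
    unfold nseq_op; simpl.
    destruct (excluded_middle_informative (x = x)); [|congruence].
    rewrite Hu2. reflexivity.
  - intros [x u] [y u'] H1 H2 Hn. unfold nseq_emp, nseq_op in *; simpl in *.
    destruct (excluded_middle_informative (x = y)); [|reflexivity].
    subst. rewrite He; auto. intro; subst; auto.
Qed.
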